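(* Let $f:E\to X$ be a fibrewise pointed map over $B$. Then $\mathrm{secat}_B(f)\le\mathrm{cat}^*_B(X)$. If moreover $E$ is fibrewise contractible, then $\mathrm{secat}_B(f)=\mathrm{cat}^*_B(X)$.
   Context: Fibrewise space over $B$: a space $X$ with a map $p_X:X\to B$; fibrewise map: $p_Yf=p_X$; fibrewise pointed space: with a section $s_X$ of $p_X$; fibrewise pointed map: fibrewise map with $fs_E=s_X$. Fibrewise homotopy: $H:X\times[0,1]\to Y$ with $p_Y(H(x,t))=p_X(x)$ ($\simeq_B$). A fibrewise space is fibrewise contractible if it is fibrewise homotopy equivalent to $B$ (with projection $\mathrm{id}_B$). $\mathrm{secat}_B(f)$: least $n$ such that $X$ is covered by $n+1$ open sets $U$ each with a fibrewise map $s:U\to E$, $fs\simeq_B$ the inclusion $U\hookrightarrow X$. $\mathrm{cat}^*_B(X)$: least $n$ such that $X$ is covered by $n+1$ open sets $U_i$ with inclusion $U_i\hookrightarrow X$ fibrewise homotopic to $s_X\circ p_X|_{U_i}$. Both $\infty$ if no such $n$. *)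

(* Defs.v *)
From HB Require Import structures.
From mathcomp Require Import all_boot all_order all_algebra.
From mathcomp Require Import all_classical all_reals all_analysis.
Set Implicit Arguments. Unset Strict Implicit. Unset Printing Implicit Defensive.
Import Order.TTheory GRing.Theory Num.Theory.
Import numFieldNormedType.Exports.
Local Open Scope classical_set_scope.
Local Open Scope ring_scope.

(* The unit interval [0,1] is taken inside an arbitrary realType R.
   Maps defined on a subset U of X are represented by total functions whose
   values only matter on U (continuity taken "within U"). *)

Definition fw_homotopic (R : realType) (B X Y : topologicalType)
    (pX : X -> B) (pY : Y -> B) (U : set X) (f g : X -> Y) : Prop :=
  exists H : X * R -> Y,
    {within U `*` [set t : R | 0 <= t <= 1], continuous H} /\
    (forall x, U x -> H (x, 0) = f x /\ H (x, 1) = g x) /\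
    (forall x t, U x -> 0 <= t <= 1 -> pY (H (x, t)) = pX x).

Definition fw_space (B X : topologicalType) (pX : X -> B) : Prop :=
  continuous pX.

Definition fw_pointed_space (B X : topologicalType) (pX : X -> B) (sX : B -> X)
  : Prop := continuous pX /\ continuous sX /\ (forall b, pX (sX b) = b).

Definition fw_map (B X Y : topologicalType) (pX : X -> B) (pY : Y -> B)
  (f : X -> Y) : Prop := continuous f /\ (forall x, pY (f x) = pX x).

Definition fw_pointed_map (B E X : topologicalType) (pE : E -> B) (sE : B -> E)
  (pX : X -> B) (sX : B -> X) (f : E -> X) : Prop :=
  fw_map pE pX f /\ (forall b, f (sE b) = sX b).

Definition fw_homotopy_equivalent (R : realType) (B X Y : topologicalType)
    (pX : X -> B) (pY : Y -> B) : Prop :=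
  exists (g : X -> Y) (h : Y -> X),
    fw_map pX pY g /\ fw_map pY pX h /\
    fw_homotopic R pX pX setT (h \o g) id /\
    fw_homotopic R pY pY setT (g \o h) id.

Definition fw_contractible (R : realType) (B E : topologicalType) (pE : E -> B)
  : Prop := fw_homotopy_equivalent R pE (@id B).

Definition secatB_le (R : realType) (B E X : topologicalType)
    (pE : E -> B) (pX : X -> B) (f : E -> X) (n : nat) : Prop :=
  exists U : 'I_n.+1 -> set X,
    (forall i, open (U i)) /\ (forall x, exists i, U i x) /\
    forall i, exists s : X -> E,
      {within U i, continuous s} /\
      (forall x, U i x -> pE (s x) = pX x) /\
      fw_homotopic R pX pX (U i) (f \o s) id.

Definition catB_le (R : realType) (B X : topologicalType)
    (pX : X -> B) (sX : B -> X) (n : nat) : Prop :=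
  exists U : 'I_n.+1 -> set X,
    (forall i, open (U i)) /\ (forall x, exists i, U i x) /\
    forall i, fw_homotopic R pX pX (U i) id (sX \o pX).

(* values in the extended reals: least such n, or +oo if none *)
Definition secatB (R : realType) (B E X : topologicalType)
    (pE : E -> B) (pX : X -> B) (f : E -> X) : \bar R :=
  ereal_inf [set (n%:R)%:E | n in [set n | secatB_le R pE pX f n]].

Definition catB (R : realType) (B X : topologicalType)
    (pX : X -> B) (sX : B -> X) : \bar R :=
  ereal_inf [set (n%:R)%:E | n in [set n | catB_le R pX sX n]].

(* Main.v *)
Require Import Defs.
From mathcomp Require Import all_boot all_order all_algebra.
From mathcomp Require Import all_classical all_reals all_analysis.
Import numFieldNormedType.Exports.
Local Open Scope classical_set_scope.
Local Open Scope ring_scope.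
Set Implicit Arguments. Unset Strict Implicit. Unset Printing Implicit Defensive.

Lemma within_comp {S T U : topologicalType} (A : set S) (B : set T)
  (phi : S -> T) (H : T -> U) :
  {within A, continuous phi} -> (forall x, A x -> B (phi x)) ->
  {within B, continuous H} -> {within A, continuous (H \o phi)}.
Proof.
move=> /continuousP cp AB /continuousP cH; apply/continuousP => W oW.
have [V oV VE] := (open_subspaceP _ _).1 (cH W oW).
have [V' oV' V'E] := (open_subspaceP _ _).1 (cp V oV).
apply/open_subspaceP; exists V' => //.
rewrite V'E; apply/seteqP; split => x [h Ax]; split => //.
- have : (V `&` B) (phi x) by split => //; apply: AB.
  by rewrite VE => -[].
- have : ((from_subspace B H @^-1` W) `&` B) (phi x) by split => //; apply: AB.
  by rewrite -VE => -[].
Qed.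

Lemma within_ext {T U : topologicalType} (A : set T) (f g : T -> U) :
  (forall x, A x -> f x = g x) ->
  {within A, continuous f} -> {within A, continuous g}.
Proof.
move=> fg /continuousP cf; apply/continuousP => W oW.
have [V oV VE] := (open_subspaceP _ _).1 (cf W oW).
apply/open_subspaceP; exists V => //; rewrite VE.
apply/seteqP; split => x [h Ax]; split => //=.
- by move: h; rewrite /from_subspace /preimage /= fg.
- by move: h; rewrite /from_subspace /preimage /= fg.
Qed.

Lemma within_pair {T U V : topologicalType} (A : set T) (f : T -> U) (g : T -> V) :
  {within A, continuous f} -> {within A, continuous g} ->
  {within A, continuous (fun x => (f x, g x))}.
Proof. by move=> cf cg x; apply: cvg_pair; [exact: cf | exact: cg]. Qed.

Lemma within_paste {T U : topologicalType} (C A B : set T) (f : T -> U) :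
  closed A -> closed B -> C `<=` A `|` B ->
  {within C `&` A, continuous f} -> {within C `&` B, continuous f} ->
  {within C, continuous f}.
Proof.
move=> cA cB CAB /continuous_closedP ctsA /continuous_closedP ctsB.
apply/continuous_closedP => W oW.
case/closed_subspaceP: (ctsA _ oW) => V1 cV1 V1W.
case/closed_subspaceP: (ctsB _ oW) => V2 cV2 V2W.
apply/closed_subspaceP; exists ((V1 `&` A) `|` (V2 `&` B)).
  by apply: closedU; exact: closedI.
apply/seteqP; split => x.
- case=> [][[V1x Ax]|[V2x Bx]] Cx.
  + have : (V1 `&` (C `&` A)) x by [].
    by rewrite V1W => -[].
  + have : (V2 `&` (C `&` B)) x by [].
    by rewrite V2W => -[].
- case=> fx Cx; split => //; case: (CAB x Cx) => [Ax|Bx].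
  + have : ((from_subspace (C `&` A) f @^-1` W) `&` (C `&` A)) x by [].
    by rewrite -V1W => -[]; left.
  + have : ((from_subspace (C `&` B) f @^-1` W) `&` (C `&` B)) x by [].
    by rewrite -V2W => -[]; right.
Qed.

From mathcomp Require Import lra.
Import Order.TTheory GRing.Theory Num.Theory.

Section H.
Variable R : realType.
Let I := [set t : R | 0 <= t <= 1].

Lemma cont_map2 {X : topologicalType} (g : R -> R) :
  continuous g -> continuous (fun p : X * R => (p.1, g p.2)).
Proof.
move=> cg [x t].
apply: (@cvg_pair _ _ _ (nbhs (x, t)) (nbhs x) (nbhs (g t))).
  exact: (@cvg_fst _ _ (nbhs x) (nbhs t)).
apply: cvg_comp; [exact: (@cvg_snd _ _ (nbhs x) (nbhs t)) | exact: cg].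
Qed.

Lemma cont_affine (a b : R) : continuous (fun t : R => a * t + b).
Proof.
move=> t; apply: cvgD; last exact: cvg_cst.
by apply: cvgMr; exact: cvg_id.
Qed.

Lemma hom_ext {B X Y : topologicalType} (pX : X -> B) (pY : Y -> B) U
  (f g f' g' : X -> Y) : (forall x, U x -> f x = f' x) ->
  (forall x, U x -> g x = g' x) ->
  fw_homotopic R pX pY U f g -> fw_homotopic R pX pY U f' g'.
Proof.
move=> ff gg [H [cH [Hfg Hp]]]; exists H; split => //; split => // x Ux.
by rewrite -ff // -gg //; apply: Hfg.
Qed.

Lemma hom_post {B X Y Z : topologicalType} (pX : X -> B) (pY : Y -> B)
  (pZ : Z -> B) U (f g : X -> Y) (k : Y -> Z) :
  continuous k -> (forall y, pZ (k y) = pY y) ->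
  fw_homotopic R pX pY U f g -> fw_homotopic R pX pZ U (k \o f) (k \o g).
Proof.
move=> ck kp [H [cH [Hfg Hp]]]; exists (k \o H); split; last split.
- by move=> x; exact: (continuous_comp (cH x) (ck _)).
- by move=> x Ux /=; have [-> ->] := Hfg x Ux.
- by move=> x t Ux It /=; rewrite kp Hp.
Qed.

Lemma hom_pre {B X E Y : topologicalType} (pX : X -> B) (pE : E -> B)
  (pY : Y -> B) U (s : X -> E) (a b : E -> Y) :
  {within U, continuous s} -> (forall x, U x -> pE (s x) = pX x) ->
  fw_homotopic R pE pY setT a b -> fw_homotopic R pX pY U (a \o s) (b \o s).
Proof.
move=> cs sp [K [cK [Kab Kp]]].
exists (fun p => K (s p.1, p.2)); split; last split.
- have -> : (fun p : X * R => K (s p.1, p.2)) =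
            K \o (fun p => (s p.1, p.2)) by [].
  apply: (@within_comp _ _ _ _ (setT `*` I)); last exact: cK.
  + apply: within_pair.
    * apply: (@within_comp _ _ _ _ U).
      - apply: continuous_subspaceT => p; exact: cvg_fst.
      - by move=> p [].
      - exact: cs.
    * apply: continuous_subspaceT => p; exact: cvg_snd.
  + by move=> p [Up Ip].
- by move=> x Ux /=; apply: Kab.
- by move=> x t Ux It /=; rewrite Kp // sp.
Qed.

Lemma hom_sym {B X Y : topologicalType} (pX : X -> B) (pY : Y -> B) U
  (f g : X -> Y) :
  fw_homotopic R pX pY U f g -> fw_homotopic R pX pY U g f.
Proof.
move=> [H [cH [Hfg Hp]]].
exists (fun p => H (p.1, 1 - p.2)); split; last split.
- have -> : (fun p : X * R => H (p.1, 1 - p.2)) =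
            H \o (fun p => (p.1, 1 - p.2)) by [].
  apply: (@within_comp _ _ _ _ (U `*` I)); last exact: cH.
  + apply: continuous_subspaceT; apply: (cont_map2 (g := fun t : R => 1 - t)).
    have -> : (fun t : R => 1 - t) = (fun t => (-1) * t + 1).
      by apply: funext => t; lra.
    exact: cont_affine.
  + move=> [x t] [/= Ux /andP[t0 t1]]; split => //=; apply/andP; split; lra.
- move=> x Ux /=; rewrite GRing.subr0 GRing.subrr.
  by have [-> ->] := Hfg x Ux.
- move=> x t Ux /andP[t0 t1] /=; apply: Hp => //; apply/andP; split; lra.
Qed.

Lemma hom_trans {B X Y : topologicalType} (pX : X -> B) (pY : Y -> B) U
  (f g h : X -> Y) :
  fw_homotopic R pX pY U f g -> fw_homotopic R pX pY U g h ->
  fw_homotopic R pX pY U f h.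
Proof.
move=> [H1 [cH1 [H1e H1p]]] [H2 [cH2 [H2e H2p]]].
pose H := fun p : X * R => if p.2 <= 2^-1 then H1 (p.1, 2 * p.2)
                           else H2 (p.1, 2 * p.2 - 1).
exists H; split; last split.
- apply: (@within_paste _ _ _ (@snd X R @^-1` [set t | t <= 2^-1])
                             (@snd X R @^-1` [set t | 2^-1 <= t])).
  + apply: preimage_closed; last exact: closed_le.
    by move=> p _; exact: cvg_snd.
  + apply: preimage_closed; last exact: closed_ge.
    by move=> p _; exact: cvg_snd.
  + move=> p _ /=; case: (lerP p.2 2^-1) => hp; [left|right] => //.
    exact: ltW.
  + apply: (@within_ext _ _ _ (H1 \o (fun p => (p.1, 2 * p.2 + 0)))).
      by move=> [x t] [_ /= ht]; rewrite /H /= ht addr0.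
    apply: (@within_comp _ _ _ _ (U `*` I)); last exact: cH1.
    * apply: continuous_subspaceT; apply: (cont_map2 (g := fun t : R => 2 * t + 0)).
      exact: cont_affine.
    * move=> [x t] [[/= Ux /andP[t0 t1]] /= th]; split => //=.
      apply/andP; split; lra.
  + apply: (@within_ext _ _ _ (H2 \o (fun p => (p.1, 2 * p.2 + (-1))))).
      move=> [x t] [[/= Ux /andP[t0 t1]] /= th]; rewrite /H /=.
      case: ifPn => ht.
        have te : t = 2^-1 by apply/eqP; rewrite eq_le ht th.
        have -> : 2 * t + -1 = 0 by rewrite te; lra.
        have -> : 2 * t = 1 by rewrite te; lra.
        by have [_ ->] := H1e x Ux; have [-> _] := H2e x Ux.
      by [].
    apply: (@within_comp _ _ _ _ (U `*` I)); last exact: cH2.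
    * apply: continuous_subspaceT; apply: (cont_map2 (g := fun t : R => 2 * t + -1)).
      exact: cont_affine.
    * move=> [x t] [[/= Ux /andP[t0 t1]] /= th]; split => //=.
      apply/andP; split; lra.
- move=> x Ux; rewrite /H /=; split.
  + have -> : (0:R) <= 2^-1 by lra.
    by rewrite mulr0; have [-> _] := H1e x Ux.
  + have -> : ((1:R) <= 2^-1) = false by apply/negbTE; rewrite -ltNge; lra.
    have -> : 2 * 1 - 1 = 1 :> R by lra.
    by have [_ ->] := H2e x Ux.
- move=> x t Ux /andP[t0 t1]; rewrite /H /=; case: ifPn => ht.
  + apply: H1p => //; apply/andP; split; lra.
  + rewrite -ltNge in ht; apply: H2p => //; apply/andP; split; lra.
Qed.
End H.

Section Main.
Variables (R : realType) (B E X : topologicalType)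
    (pE : E -> B) (sE : B -> E) (pX : X -> B) (sX : B -> X) (f : E -> X).

Lemma cat_secat n : fw_pointed_space pE sE -> fw_pointed_space pX sX ->
  fw_pointed_map pE sE pX sX f -> catB_le R pX sX n -> secatB_le R pE pX f n.
Proof.
move=> [cpE [csE psE]] [cpX [csX psX]] [[cf fp] fs] [U [oU [cov hU]]].
exists U; split => //; split => // i; exists (sE \o pX); split; last split.
- by apply: continuous_subspaceT => x; exact: (continuous_comp (cpX x) (csE _)).
- by move=> x _ /=; rewrite psE.
- apply: hom_sym; apply: (hom_ext _ _ (hU i)) => // x _ /=.
  by rewrite fs.
Qed.

Lemma secat_cat n : fw_pointed_space pE sE -> fw_pointed_space pX sX ->
  fw_pointed_map pE sE pX sX f -> fw_contractible R pE ->
  secatB_le R pE pX f n -> catB_le R pX sX n.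
Proof.
move=> [cpE [csE psE]] [cpX [csX psX]] [[cf fp] fs]
  [g [h [[cg gp] [[ch hp] [K1 _]]]]] [U [oU [cov hU]]].
have csp : continuous (sE \o pE).
  by move=> x; exact: (continuous_comp (cpE x) (csE _)).
have hid : fw_homotopic R pE pE setT id (sE \o pE).
  apply: (hom_trans (hom_sym K1)).
  have K2 := hom_pre (continuous_subspaceT (A := setT) csp)
     (fun x _ => psE (pE x)) K1.
  apply: (hom_ext _ _ K2) => // x _ /=.
  by rewrite gp psE -gp.
exists U; split => //; split => // i.
have [s [cs [sp hs]]] := hU i.
apply: (hom_trans (hom_sym hs)).
have := hom_post (pZ := pX) cf fp (hom_pre cs sp hid).
apply: hom_ext => // x Ux /=.
by rewrite fs sp.
Qed.
End Main.

Theorem proposition2p2 (R : realType) (B E X : topologicalType)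
    (pE : E -> B) (sE : B -> E) (pX : X -> B) (sX : B -> X) (f : E -> X) :
  fw_pointed_space pE sE -> fw_pointed_space pX sX ->
  fw_pointed_map pE sE pX sX f ->
  ((secatB R pE pX f <= catB R pX sX)%E /\
   (fw_contractible R pE -> secatB R pE pX f = catB R pX sX)).
Proof.
move=> hE hX hf; split.
- apply: ereal_inf_le_tmp => y [n hn <-]. exists n => //.
  exact: (cat_secat hE hX hf hn).
- move=> hc; rewrite /secatB /catB; congr ereal_inf.
  apply/seteqP; split => _ [n hn <-]; exists n => //.
  + exact: (secat_cat hE hX hf hc hn).
  + exact: (cat_secat hE hX hf hn).
Qed.
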